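(* Let $(M,\omega)$ be a closed symplectic manifold and $K\subset M$ compact, and let $\widehat{tel}$ be the completed telescope complex with differential $\delta$ associated with an acceleration datum $\{H_n\}$ for $K$. If $\widehat{tel}$ has finite boundary depth, then $\operatorname{im}(\delta)=\overline{\operatorname{im}(\delta)}$, and hence the natural map $SH_M(K;\Lambda)\to SH^{red}_M(K;\Lambda)$ is an isomorphism.
   Context: $\Lambda$ is the Novikov field of series $\sum_{i\ge0}a_iT^{\lambda_i}$, $a_i\in\mathbb{Q}$, $\lambda_i\in\mathbb{R}$ strictly increasing to $+\infty$, valuation $\operatorname{val}$. An acceleration datum for $K$ is a sequence of nondegenerate Hamiltonians $H_1\le H_2\le\cdots$ on $M\times S^1$, negative on $K\times S^1$, converging to $0$ on $K$ and to $+\infty$ off $K$, with monotone homotopies giving continuation maps between the Floer complexes $CF(H_n;\Lambda)$ (generated by contractible orbits, differential weighted by $T^{E_{top}(u)}$). $\widehat{tel}$ is the completion with respect to the norm $e^{-\operatorname{val}}$ (valuation = minimum coefficient valuation) of the telescope $\bigoplus_n(CF(H_n;\Lambda)\oplus CF(H_n;\Lambda)[1])$ with its telescope differential $\delta$. $SH_M(K;\Lambda)=\ker\delta/\operatorname{im}\delta$, $SH^{red}_M(K;\Lambda)=\ker\delta/\overline{\operatorname{im}\delta}$, closure in the norm topology. The boundary depth of $(\widehat{tel},\delta)$ is $\sup_{x\in\operatorname{im}\delta}\inf_{y:\delta y=x}(\operatorname{val}(x)-\operatorname{val}(y))$. *)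

(* Defs.v *)
From HB Require Import structures.
From mathcomp Require Import all_boot all_order all_algebra.
From mathcomp Require Import all_classical all_reals ereal.
Set Implicit Arguments. Unset Strict Implicit. Unset Printing Implicit Defensive.
Import Order.TTheory GRing.Theory Num.Theory.
Local Open Scope ring_scope.
Local Open Scope classical_set_scope.
Local Open Scope ereal_scope.

Definition field_valuation (R : realType) (F : fieldType) (valF : F -> \bar R) :=
  [/\ forall a, valF a != -oo,
      forall a, (valF a == +oo) = (a == 0%R),
      forall a b, valF (a * b)%R = valF a + valF b
    & forall a b, Order.min (valF a) (valF b) <= valF (a + b)%R].

(* A valuation on a vector space over a valued field (norm = e^{-val}). *)
Definition module_valuation (R : realType) (F : fieldType) (valF : F -> \bar R)
    (V : lmodType F) (val : V -> \bar R) :=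
  [/\ forall x, val x != -oo,
      forall x, (val x == +oo) = (x == 0%R),
      forall a x, val (a *: x) = valF a + val x
    & forall x y, Order.min (val x) (val y) <= val (x + y)%R].

Definition val_complete (R : realType) (V : zmodType) (val : V -> \bar R) :=
  forall u : nat -> V,
    (forall r : R, exists N, forall m n, (N <= m)%N -> (N <= n)%N ->
        r%:E < val (u n - u m)%R) ->
    exists l, forall r : R, exists N, forall n, (N <= n)%N -> r%:E < val (u n - l)%R.

Definition val_closure (R : realType) (V : zmodType) (val : V -> \bar R)
    (S : set V) : set V :=
  [set x | forall r : R, exists2 s, S s & r%:E < val (x - s)%R].

Definition image_of (V : zmodType) (d : V -> V) : set V :=
  [set x | exists y, d y = x].

Definition boundary_depth (R : realType) (V : zmodType) (val : V -> \bar R)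
    (d : V -> V) : \bar R :=
  ereal_sup [set ereal_inf [set val x - val y | y in [set y | d y = x]]
            | x in [set x | image_of d x /\ x <> 0%R]].

(* Main.v *)
Require Import Defs.
From HB Require Import structures.
From mathcomp Require Import all_boot all_order all_algebra.
From mathcomp Require Import all_classical all_reals ereal.
From mathcomp Require Import lra.
Import Order.TTheory GRing.Theory Num.Theory.
Local Open Scope ring_scope.
Local Open Scope classical_set_scope.
Local Open Scope ereal_scope.

Theorem lemma3p19 (R : realType) (F : fieldType) (valF : F -> \bar R)
    (V : lmodType F) (val : V -> \bar R) (delta : {linear V -> V}) :
  field_valuation valF ->
  module_valuation valF val ->
  val_complete val ->
  (forall x, delta (delta x) = 0%R) ->
  (forall x, val x <= val (delta x)) ->
  boundary_depth val delta < +oo ->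
  image_of delta = val_closure val (image_of delta) /\
  (forall x, delta x = 0%R -> val_closure val (image_of delta) x ->
     image_of delta x).
Proof.
move=> [vF1 vF2 vF3 vF4] [v1 v2 v3 v4] vC dd dmon bd.
have val0 : val 0%R = +oo by apply/eqP; rewrite v2.
have vfin : forall x : V, x != 0%R -> exists r, val x = r%:E.
  move=> x x0; case E: (val x) => [r| |]; [by exists r| |].
  - by move: (v2 x); rewrite E eqxx (negbTE x0).
  - by move: (v1 x); rewrite E.
have vFfin : forall a : F, a != 0%R -> exists r, valF a = r%:E.
  move=> a a0; case E: (valF a) => [r| |]; [by exists r| |].
  - by move: (vF2 a); rewrite E eqxx (negbTE a0).
  - by move: (vF1 a); rewrite E.
have valN : forall x : V, val (- x)%R = val x.
  have F1 : valF 1%R = 0.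
    have h := vF3 1%R 1%R; rewrite mulr1 in h.
    have [r Er] := vFfin 1%R (oner_neq0 _).
    rewrite Er -EFinD in h; case: h => h.
    by rewrite Er; congr (_%:E); lra.
  have Fm : valF (-1)%R = 0.
    have h := vF3 (-1)%R (-1)%R; rewrite mulrNN mulr1 F1 in h.
    have [r Er] := vFfin (-1)%R (ltac:(by rewrite oppr_eq0 oner_eq0)).
    rewrite Er -EFinD in h; case: h => h.
    by rewrite Er; congr (_%:E); lra.
  by move=> x; rewrite -scaleN1r v3 Fm add0e.
have vlt : forall (r : \bar R) x y, r < val x -> r < val y -> r < val (x + y)%R.
  move=> r x y hx hy; apply: (lt_le_trans _ (v4 x y)); by rewrite lt_min hx hy.
have [B HB] : exists B : R, forall x, image_of delta x -> exists y,
    delta y = x /\ forall r : R, (r + B)%:E < val x -> r%:E < val y.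
  have [B hB] : exists B : R, boundary_depth val delta < B%:E.
    move: bd; case: (boundary_depth val delta) => [r| |] // _.
      by exists (r + 1)%R; rewrite lte_fin ltrDl ltr01.
    by exists 0%R; rewrite ltNyr.
  exists B => x [y0 hy0].
  case: (eqVneq x 0%R) => [-> | x0].
    by exists 0%R; split; [exact: linear0 | move=> r _; rewrite val0 ltry].
  have : ereal_inf [set val x - val y | y in [set y | delta y = x]] < B%:E.
    apply: le_lt_trans hB; apply: ereal_sup_ubound; exists x => //.
    by split; [exists y0 | apply/eqP].
  case/ereal_inf_lt => e [y hy <-] hlt; exists y; split => // r hr.
  have [vx Ex] := vfin x x0.
  have y0' : y != 0%R by apply: contra_neq x0 => y0e; rewrite -hy y0e linear0.
  have [vy Ey] := vfin y y0'.
  rewrite Ex Ey -EFinD lte_fin in hlt; rewrite Ex lte_fin in hr.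
  rewrite Ey lte_fin; lra.
have archi : forall r : R, exists N : nat, forall n : nat, (N <= n)%N -> (r < n%:R)%R.
  move=> r; exists (Num.Def.archi_bound `|r|%R) => n hn.
  have h := @archi_boundP R `|r|%R (normr_ge0 _).
  apply: (le_lt_trans (ler_norm r)); apply: (lt_le_trans h); by rewrite ler_nat.
have key : forall x, val_closure val (image_of delta) x -> image_of delta x.
  move=> x hx.
  have : forall k : nat, exists s, image_of delta s /\ (k%:R)%:E < val (x - s)%R.
    by move=> k; case: (hx k%:R) => s h1 h2; exists s.
  move=> /choice [s hs].
  pose t k := match k with 0%N => 0%R | j.+1 => s j end.
  pose d k := (s k - t k)%R.
  have dim : forall k, image_of delta (d k).
    move=> k; case: (hs k) => [[a ha] _]; rewrite /d.
    case: k ha => [|j] ha /=.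
      by exists a; rewrite subr0.
    case: (hs j) => [[b hb] _]; exists (a - b)%R; by rewrite linearB ha hb.
  have /choice [y hy] := fun k => HB _ (dim k).
  have ybd : forall k (r : R), (0 < k)%N -> (r + B + 1 < k%:R)%R -> r%:E < val (y k).
    move=> [|k] r // _ hk; apply: (proj2 (hy k.+1)); rewrite /d /=.
    have -> : (s k.+1 - s k = - (x - s k.+1) + (x - s k))%R.
      by rewrite opprB addrA subrK.
    apply: vlt; rewrite ?valN.
      apply: (lt_trans _ (proj2 (hs k.+1))); rewrite lte_fin; lra.
    apply: (lt_trans _ (proj2 (hs k))); rewrite lte_fin.
    move: hk; rewrite -natr1 => hk; lra.
  pose Y n := (\sum_(i < n.+1) y i)%R.
  have dY : forall n, delta (Y n) = s n.
    elim=> [|n IH].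
      by rewrite /Y big_ord1 (proj1 (hy 0%N)) /d /= subr0.
    by rewrite /Y big_ord_recr /= linearD -/(Y n) IH (proj1 (hy n.+1)) /d /= addrC subrK.
  have Ycauchy : forall r : R, exists N, forall m n, (N <= m)%N -> (N <= n)%N ->
      r%:E < val (Y n - Y m)%R.
    move=> r; have [N0 hN0] := archi (r + B + 1)%R.
    exists N0.+1.
    have step : forall m k, (N0.+1 <= m)%N -> r%:E < val (Y (m + k)%N - Y m)%R.
      move=> m; elim=> [|k IH] hm.
        by rewrite addn0 subrr val0 ltry.
      rewrite addnS /Y big_ord_recr /= -/(Y (m + k)%N) addrAC.
      apply: vlt; first exact: IH.
      apply: ybd => //; apply: hN0; apply: (leq_trans _ (leqnSn _)).
      apply: (leq_trans (leqnSn _)); apply: (leq_trans hm); exact: leq_addr.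
    move=> m n hm hn; case: (leqP m n) => hmn.
      by rewrite -(subnKC hmn); apply: step.
    rewrite -valN opprB -(subnKC (ltnW hmn)); apply: step => //.
  have [l hl] := vC Y Ycauchy.
  exists l; apply/eqP; rewrite -subr_eq0 -v2.
  suff : forall r : R, r%:E < val (delta l - x)%R.
    by case: (val (delta l - x)%R) => [v| |] // h; [move: (h v); rewrite ltxx | move: (h 0%R)].
  move=> r; have [N1 h1] := hl r; have [N2 h2] := archi r.
  pose n := maxn N1 N2.
  have -> : (delta l - x = delta (l - Y n) + - (x - s n))%R.
    by rewrite linearB dY opprB addrA subrK.
  apply: vlt.
    apply: (lt_le_trans _ (dmon _)); rewrite -valN opprB; apply: h1; exact: leq_maxl.
  rewrite valN; apply: (lt_trans _ (proj2 (hs n))); rewrite lte_fin; apply: h2; exact: leq_maxr.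
split.
  apply/seteqP; split => z hz; last exact: key.
  by move=> r; exists z => //; rewrite subrr val0 ltry.
by move=> z _ /key.
Qed.
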